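(* (a) There exist $n$ and a linear subspace $X\subset \mathrm{Mat}_{n\times n}(\mathbb{R})$ such that $\mathrm{MinRank}(X\otimes X)<(\mathrm{MinRank}(X))^2$. (b) For every integer $N\ge 0$ there exist $n$ and a linear subspace $X\subset\mathrm{Mat}_{n\times n}(\mathbb{R})$ such that $(\mathrm{MinRank}(X))^2-\mathrm{MinRank}(X\otimes X)\ge N$.
   Context: For a nonzero linear subspace $X\subset\mathrm{Mat}_{n\times n}(\mathbb{R})$, $\mathrm{MinRank}(X)$ is the minimal rank of a nonzero matrix in $X$. $X\otimes X\subset \mathrm{Mat}_{n^2\times n^2}(\mathbb{R})$ denotes the linear span of all Kronecker products $x\otimes y$ with $x,y\in X$. *)

(* Defs.v *)
From HB Require Import structures.
From mathcomp Require Import all_boot all_order all_algebra.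
From mathcomp Require Import boolp reals.
From mathcomp.real_closed Require Import mxtens.
Set Implicit Arguments. Unset Strict Implicit. Unset Printing Implicit Defensive.
Import GRing.Theory.
Local Open Scope ring_scope.

(* Kronecker product: tensmx (A *t B) from mathcomp real_closed mxtens.v,
   (A *t B) (i1*n+i2, j1*n+j2) = A i1 j1 * B i2 j2. *)

Definition has_rank_in (R : realType) (n : nat) (X : {vspace 'M[R]_n}) (r : nat) :=
  exists2 A : 'M[R]_n, A \in X & (A != 0) /\ \rank A = r.

(* MinRank X = minimal rank of a nonzero matrix of X (all ranks are <= n);
   for X = 0 this returns the default value n (irrelevant: X nonzero below). *)
Definition MinRank (R : realType) (n : nat) (X : {vspace 'M[R]_n}) : nat :=
  \big[minn/n]_(r < n.+1 | `[< has_rank_in X r >]) (r : nat).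

(* X (x) X = linear span of all Kronecker products x *t y with x, y in X *)
Definition tens_space (R : realType) (n : nat) (X : {vspace 'M[R]_n})
  : {vspace 'M[R]_(n * n)} :=
  (\sum_(x <- vbasis X) \sum_(y <- vbasis X) <[ (x *t y : 'M[R]_(n * n)) ]>)%VS.

(* Main.v *)
Require Import Defs.
From HB Require Import structures.
From mathcomp Require Import all_boot all_order all_algebra.
From mathcomp Require Import boolp reals.
From mathcomp.real_closed Require Import mxtens.
From mathcomp Require Import zify.
Set Implicit Arguments. Unset Strict Implicit.
Local Open Scope ring_scope.
Import GRing.Theory Num.Theory.

Section H.
Variable R : realType.

Lemma tensDl m n p q (A B : 'M[R]_(m,n)) (C : 'M[R]_(p,q)) :
  (A + B) *t C = A *t C + B *t C.
Proof. by apply/matrixP=> i j; rewrite !mxE mulrDl. Qed.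
Lemma tensDr m n p q (A : 'M[R]_(m,n)) (B C : 'M[R]_(p,q)) :
  A *t (B + C) = A *t B + A *t C.
Proof. by apply/matrixP=> i j; rewrite !mxE mulrDr. Qed.
Lemma tensZl m n p q a (A : 'M[R]_(m,n)) (C : 'M[R]_(p,q)) :
  (a *: A) *t C = a *: (A *t C).
Proof. by apply/matrixP=> i j; rewrite !mxE mulrA. Qed.
Lemma tensZr m n p q a (A : 'M[R]_(m,n)) (C : 'M[R]_(p,q)) :
  A *t (a *: C) = a *: (A *t C).
Proof. by apply/matrixP=> i j; rewrite !mxE mulrCA. Qed.
Lemma tensNl m n p q (A : 'M[R]_(m,n)) (C : 'M[R]_(p,q)) :
  (- A) *t C = - (A *t C).
Proof. by apply/matrixP=> i j; rewrite !mxE mulNr. Qed.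
Lemma tensNr m n p q (A : 'M[R]_(m,n)) (C : 'M[R]_(p,q)) :
  A *t (- C) = - (A *t C).
Proof. by apply/matrixP=> i j; rewrite !mxE mulrN. Qed.
Lemma tens_suml m n p q k (A : 'I_k -> 'M[R]_(m,n)) (C : 'M[R]_(p,q)) :
  (\sum_i A i) *t C = \sum_i (A i *t C).
Proof.
by apply: (big_morph (fun M => M *t C)) => [x y|]; rewrite ?tensDl ?tens0mx.
Qed.
Lemma tens_sumr m n p q k (A : 'M[R]_(m,n)) (C : 'I_k -> 'M[R]_(p,q)) :
  A *t (\sum_i C i) = \sum_i (A *t C i).
Proof.
by apply: (big_morph (fun M => A *t M)) => [x y|]; rewrite ?tensDr ?tensmx0.
Qed.

Lemma tens11 m p : (1%:M : 'M[R]_m) *t (1%:M : 'M[R]_p) = 1%:M.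
Proof.
apply/matrixP=> i j; case: (mxtens_indexP i)=> i1 i2; case: (mxtens_indexP j)=> j1 j2.
rewrite tensmxE !mxE (can_eq (@mxtens_indexK _ _)) xpair_eqE.
by case: (i1 == j1); case: (i2 == j2); rewrite /= ?mulr1 ?mulr0 ?mul0r.
Qed.

Lemma memv_tens n (X : {vspace 'M[R]_n}) x y :
  x \in X -> y \in X -> x *t y \in tens_space X.
Proof.
move=> xX yX.
have Hb : forall u v, u \in (vbasis X : seq _) -> v \in (vbasis X : seq _) ->
    u *t v \in tens_space X.
  move=> u v uX vX; rewrite /tens_space (big_rem u) //=.
  apply: (subvP (addvSl _ _)); rewrite (big_rem v) //=.
  by apply: (subvP (addvSl _ _)); apply: memv_line.
rewrite (coord_vbasis xX) (coord_vbasis yX) tens_suml.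
apply: rpred_sum => i _; rewrite tens_sumr; apply: rpred_sum => j _.
rewrite tensZl tensZr; apply: rpredZ; apply: rpredZ; by apply: Hb; apply: mem_nth; rewrite size_tuple.
Qed.

Lemma minrank_lb n (X : {vspace 'M[R]_n}) k :
  (forall A, A \in X -> A != 0 -> (k <= \rank A)%N) -> (k <= n)%N ->
  (k <= MinRank X)%N.
Proof.
move=> H kn; rewrite /MinRank; apply: (big_ind (fun x => k <= x)%N) => //.
  by move=> x y; rewrite leq_min => -> ->.
by move=> i /asboolP [A AX [A0 <-]]; apply: H.
Qed.

Lemma bigmin_le_seq (I : eqType) (r : seq I) (P : pred I) (F : I -> nat) x i0 :
  i0 \in r -> P i0 -> (\big[minn/x]_(i <- r | P i) F i <= F i0)%N.
Proof.
elim: r => // a r IH; rewrite inE big_cons => /orP [/eqP -> -> | ir Pi].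
  exact: geq_minl.
by case: (P a); [apply: leq_trans (geq_minr _ _) _|]; apply: IH.
Qed.

Lemma minrank_ub n (X : {vspace 'M[R]_n}) A :
  A \in X -> A != 0 -> (MinRank X <= \rank A)%N.
Proof.
move=> AX A0; rewrite /MinRank.
have lt : (\rank A < n.+1)%N by rewrite ltnS rank_leq_row.
apply: (@bigmin_le_seq _ _ _ (fun i : 'I_n.+1 => nat_of_ord i) _ (Ordinal lt)); first exact: mem_index_enum.
by apply/asboolP; exists A.
Qed.

Section Gen.
Variables (n : nat) (J K : 'M[R]_n).
Hypotheses (n0 : (0 < n)%N) (JJ : J *m J = - 1%:M) (KK : K *m K = 1%:M)
  (KJ : K *m J = - (J *m K)).

Definition XJ : {vspace 'M[R]_n} := (<[1%:M]> + <[J]>)%VS.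

Lemma XJ_rank A : A \in XJ -> A != 0 -> (n <= \rank A)%N.
Proof.
move=> /memv_addP [u /vlineP [a ->] [v /vlineP [b ->] ->]] A0.
set c := a ^+ 2 + b ^+ 2.
have c0 : c != 0.
  apply: contra A0; rewrite /c paddr_eq0 ?sqr_ge0 // !sqrf_eq0 => /andP[/eqP -> /eqP ->].
  by rewrite !scale0r addr0.
have E : (a *: 1%:M + b *: J) *m (a *: 1%:M - b *: J) = c *: 1%:M.
  rewrite mulmxDr !mulmxDl !mulmxN. rewrite -!scalemxAl -!scalemxAr !mul1mx !mulmx1 JJ.
  rewrite /c !scalerA !expr2 scalerN scalerDl opprK [b * a]mulrC addrA addrK.
  done.
have e : \rank (c *: (1%:M : 'M[R]_n)) = n by rewrite mxrank_scale_nz // mxrank1.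
by apply: leq_trans (mxrankM_maxl _ (a *: 1%:M - b *: J)); rewrite E e.
Qed.

Lemma one_XJ : (1%:M : 'M[R]_n) \in XJ.
Proof. exact: (subvP (addvSl _ _)) (memv_line _). Qed.
Lemma J_XJ : J \in XJ.
Proof. exact: (subvP (addvSr _ _)) (memv_line _). Qed.

Lemma XJ_tens : exists M, [/\ M \in tens_space XJ, M != 0 & (2 * \rank M <= n * n)%N].
Proof.
set T := J *t J; set I1 := (1%:M : 'M[R]_(n * n)); set S := K *t (1%:M : 'M[R]_n).
have t11 : (1%:M : 'M[R]_n) *t (1%:M : 'M[R]_n) = I1 by rewrite tens11.
have E1 : T *m T = I1 by rewrite tensmx_mul JJ tensNl tensNr opprK.
have E2 : S *m S = I1 by rewrite tensmx_mul KK mulmx1.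
have E3 : S *m T *m S = - T.
  by rewrite !tensmx_mul KJ mulNmx -(mulmxA J) KK mulmx1 !mul1mx mulmx1 tensNl.
have ES : S *m (I1 - T) *m S = I1 + T.
  by rewrite mulmxBr mulmxBl mulmx1 E2 E3 opprK.
have ES' : S *m (I1 + T) *m S = I1 - T.
  by rewrite mulmxDr mulmxDl mulmx1 E2 E3.
have E0 : (I1 - T) *m (I1 + T) = 0.
  by rewrite mulmxBl !mulmxDr !mul1mx mulmx1 E1 [T + _]addrC subrr.
exists (I1 - T); split.
- by apply: memvB; rewrite -?t11; apply: memv_tens; rewrite ?one_XJ ?J_XJ.
- apply/eqP => h; move: ES; rewrite h !mulmx0 mul0mx => /esym h'.
  have : I1 *+ 2 = 0 by rewrite mulr2n -{1}(subrK T I1) h add0r addrC h'.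
  move/(congr1 (@mxrank _ _ _)); rewrite -scaler_nat mxrank_scale_nz ?mxrank1 ?mxrank0.
    by move=> h2; move: (muln_gt0 n n); rewrite h2 n0.
  by rewrite pnatr_eq0 /=.
- have r1 : (\rank (I1 - T)%R <= \rank (I1 + T)%R)%N.
    rewrite -{1}ES'; apply: leq_trans (mxrankM_maxl _ _) _; exact: mxrankM_maxr.
  rewrite mul2n -addnn; apply: leq_trans (mulmx0_rank_max E0).
  by rewrite leq_add2l.
Qed.
End Gen.

Definition J2 : 'M[R]_2 := \matrix_(i < 2, j < 2)
  (if ((i : nat) == 0%N) && ((j : nat) == 1%N) then -1
   else if ((i : nat) == 1%N) && ((j : nat) == 0%N) then 1 else 0).
Definition K2 : 'M[R]_2 := \matrix_(i < 2, j < 2)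
  (if ((i : nat) == 0%N) && ((j : nat) == 0%N) then 1
   else if ((i : nat) == 1%N) && ((j : nat) == 1%N) then -1 else 0).

Ltac solve2 := apply/matrixP; case=> [[|[|//]] ?]; case=> [[|[|//]] ?];
  rewrite !mxE !big_ord_recl; do ?rewrite big_ord0; rewrite !mxE /=;
  rewrite ?(mulr0, mul0r, mulr1, mul1r, addr0, add0r, mulrNN, mulN1r, mulrN1, opprK, oppr0, mulr1n, mulr0n) //.

Lemma JJ2 : J2 *m J2 = - 1%:M.
Proof. solve2. Qed.
Lemma KK2 : K2 *m K2 = 1%:M.
Proof. solve2. Qed.
Lemma KJ2' : K2 *m J2 + J2 *m K2 = 0.
Proof. by solve2; rewrite addNr. Qed.
Lemma KJ2 : K2 *m J2 = - (J2 *m K2).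
Proof. by apply/eqP; rewrite -subr_eq0 opprK KJ2'. Qed.

Lemma gen_ex m : exists J K : 'M[R]_(m.+1 * 2),
  [/\ J *m J = - 1%:M, K *m K = 1%:M & K *m J = - (J *m K)].
Proof.
exists (1%:M *t J2), (1%:M *t K2); split.
- by rewrite tensmx_mul mulmx1 JJ2 tensNr tens11.
- by rewrite tensmx_mul mulmx1 KK2 tens11.
- by rewrite !tensmx_mul !mulmx1 KJ2 tensNr.
Qed.

Lemma partb (N : nat) : exists (n : nat) (X : {vspace 'M[R]_n}),
      X != 0%VS /\ (N + MinRank (tens_space X) <= (MinRank X) ^ 2)%N.
Proof.
have [J [K [JJ KK KJ]]] := gen_ex N.
have n0 : (0 < N.+1 * 2)%N by [].
exists (N.+1 * 2)%N, (XJ J); split.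
  apply/eqP => h; have := one_XJ J; rewrite h memv0 => /eqP /(congr1 (@mxrank _ _ _)).
  by rewrite mxrank1 mxrank0.
have lb := minrank_lb (XJ_rank JJ) (leqnn _).
have [M [MT M0 rM]] := XJ_tens n0 JJ KK KJ.
have ub := minrank_ub MT M0.
move: lb ub rM; set k := MinRank _; set t := MinRank _; set r := \rank M.
move=> lb ub rM.
have : ((N.+1 * 2) ^ 2 <= k ^ 2)%N by rewrite leq_exp2r.
nia.
Qed.
End H.

Unset Implicit Arguments.
Theorem mainTheorem2 (R : realType) :
  (exists (n : nat) (X : {vspace 'M[R]_n}),
      X != 0%VS /\ (MinRank (tens_space X) < (MinRank X) ^ 2)%N) /\
  (forall N : nat, exists (n : nat) (X : {vspace 'M[R]_n}),
      X != 0%VS /\ (N + MinRank (tens_space X) <= (MinRank X) ^ 2)%N).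
Proof.
split; last exact: partb.
have [n [X [X0 H]]] := partb R 1.
by exists n, X; split.
Qed.
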